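(* Fix an integer $n\ge 2$, a real number $0<p<1$, and $\xi>0$ as described in the context. Let $f(\mathbf{x})=x_1^p+\cdots+x_n^p$. Suppose $\mathbf{e}=(e_1,\ldots,e_n)\in\mathbb{R}^n$ satisfies $e_1+\cdots+e_n=n(n-1)$, $e_1^2+\cdots+e_n^2\le (n-1)^4+(n-1)$, $\prod_{i=1}^n e_i\ge (n-1)^2$, $e_i\le (n-1)^2$ for $i=1,\ldots,n$, $e_i\ge \xi$ for $i=1,\ldots,n$. Then $f(\mathbf{e})\ge (n-1)^{2p}+n-1$.
   Context: $\xi>0$ is a fixed number chosen such that whenever a point $\mathbf{x}$ with $x_j\le (n-1)^2$ for all $j$ has $x_i=\xi$ for some $i$, then $\prod_{j=1}^n x_j<(n-1)^2$. *)

(* Defs.v *)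
From mathcomp Require Import all_boot all_order all_algebra.
From mathcomp Require Import all_classical all_reals all_analysis.
Set Implicit Arguments. Unset Strict Implicit. Unset Printing Implicit Defensive.
Import Order.TTheory GRing.Theory Num.Theory.
Local Open Scope ring_scope.

Definition fpow (R : realType) (n : nat) (p : R) (x : 'I_n -> R) : R :=
  \sum_(i < n) powR (x i) p.

(* The defining property of xi from the context: whenever a point x of the
   positive orthant with x_j <= (n-1)^2 for all j has x_i = xi for some i,
   then prod_j x_j < (n-1)^2. *)
Definition xi_property (R : realType) (n : nat) (xi : R) : Prop :=
  forall (x : 'I_n -> R) (i : 'I_n),
    (forall j, 0 < x j) ->
    (forall j, x j <= (n.-1)%:R ^+ 2) ->
    x i = xi ->
    \prod_(j < n) x j < (n.-1)%:R ^+ 2.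

(* Main.v *)
Require Import Defs.
From mathcomp Require Import all_boot all_order all_algebra.
From mathcomp Require Import all_classical all_reals all_analysis.
From mathcomp Require Import ring lra zify.
Import Order.TTheory GRing.Theory Num.Theory.
Local Open Scope ring_scope.

Section S.
Variable R : realType.

Lemma tang (x y : R) : expR x * (1 + y - x) <= expR y.
Proof.
have h := expR_ge1Dx (y - x).
have e : expR y = expR (y - x) * expR x by rewrite -expRD subrK.
rewrite e; have := expR_gt0 x; nra.
Qed.

Lemma cvx (p w : R) : 0 <= p -> p <= 1 -> expR (p * w) <= p * expR w + (1 - p).
Proof.
move=> p0 p1.
have h1 := tang (p * w) w. have h2 := tang (p * w) 0.
have e1 := ler_wpM2l p0 h1.
have e2' : 0 <= 1 - p by rewrite subr_ge0.
have e3 := ler_wpM2l e2' h2.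
set a := expR (p*w) in e1 e3 *. set b := expR w in e1 *.
rewrite expR0 in e3.
have : a = p * (a * (1 + w - p * w)) + (1 - p) * (a * (1 + 0 - p * w)) by ring.
lra.
Qed.

Lemma tangS (p s y : R) : 0 <= p -> p <= 1 ->
  expR s * expR (p*y) <= expR (p*s) * (expR s + p*(expR y - expR s)).
Proof.
move=> p0 p1; have h := cvx p (y - s) p0 p1.
have e1 : expR (p*y) = expR (p*s) * expR (p*(y-s)) by rewrite -expRD; congr expR; ring.
have e2 : expR y = expR s * expR (y-s) by rewrite -expRD; congr expR; ring.
rewrite e1 e2.
have q : 0 < expR s * expR (p*s) by rewrite mulr_gt0 // expR_gt0.
have := ler_wpM2l (ltW q) h.
set a := expR (p*(y-s)) in h *. set b := expR (y - s) in h *.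
move=> H. apply: le_trans (_ : expR s * expR (p * s) * (p * b + (1 - p)) <= _).
  by rewrite mulrA; lra.
rewrite le_eqVlt; apply/orP; left; apply/eqP; ring.
Qed.

Lemma chord (p s u : R) : 0 <= p -> p <= 1 -> 0 <= s -> s <= u ->
  (expR (p*u) - 1) * (expR s - 1) <= (expR (p*s) - 1) * (expR u - 1).
Proof.
move=> p0 p1 s0 su.
have h1 := tangS p s 0 p0 p1. have h2 := tangS p s u p0 p1.
rewrite mulr0 expR0 in h1.
have S1 : 1 <= expR s by rewrite -expR0 ler_expR.
have SU : expR s <= expR u by rewrite ler_expR.
have Sp := expR_gt0 s.
have key : expR s * ((expR u - expR s) + (expR s - 1) * expR (p*u))
   <= expR s * ((expR u - 1) * expR (p*s)) by nra.
rewrite ler_pM2l // in key. nra.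
Qed.

Lemma mono (f df : R -> R) (a b : R) : (forall x : R, is_derive x (1:R) f (df x)) ->
  (forall x, a < x < b -> 0 <= df x) -> a <= b -> f a <= f b.
Proof.
move=> hd hpos ab.
have dv : forall x, derivable f x 1 by move=> x; case: (hd x).
apply: (@ger0_derive1_ndecr R f a b).
- by move=> x _; apply: dv.
- by move=> x; rewrite in_itv /= => /hpos; rewrite derive1E derive_val.
- by apply: derivable_within_continuous => x _; apply: dv.
- by [].
- by [].
- by [].
Qed.


Definition phi (q u : R) := expR (q*u) - 1 - q*u.

Lemma der_lin (q x : R) : is_derive x 1 (fun u : R => q * u) q.
Proof.
have h := @is_deriveZ R R R id q x 1 1 (is_derive_id x 1).
apply: (is_derive_eq h); by rewrite /GRing.scale /= mulr1.
Qed.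

Lemma der_phi (q x : R) : is_derive x 1 (phi q) (q * expR (q*x) - q).
Proof.
have h1 : is_derive x 1 (expR \o (fun u : R => q * u)) (expR (q*x) * q).
  exact: (is_derive1_comp (is_derive_expR (q*x)) (der_lin q x)).
have h2 := is_deriveB h1 (is_derive_cst (1:R) x (1:R)).
have h3 := is_deriveB h2 (der_lin q x).
apply: (is_derive_eq h3); ring.
Qed.

Lemma der_comb (a b p x : R) : is_derive x 1 (fun u => a * phi p u - b * phi 1 u)
   (a * (p * expR (p*x) - p) - b * (expR x - 1)).
Proof.
have h1 := is_deriveZ a (der_phi p x).
have h2 := is_deriveZ b (der_phi 1 x).
have h3 := is_deriveB h1 h2.
apply: (is_derive_eq h3); rewrite /GRing.scale /= !mul1r; ring.
Qed.

Lemma phi0 q : phi q 0 = 0.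
Proof. by rewrite /phi mulr0 expR0; ring. Qed.

Lemma stepA (p L : R) : 0 < p -> p < 1 -> 0 <= L -> phi p L <= p^+2 * phi 1 L.
Proof.
move=> p0 p1 L0.
have := mono _ _ 0 L (der_comb (-1) (-p^+2) p) _ L0.
rewrite !phi0 => H.
suff : -1 * 0 - - p ^+ 2 * 0 <= -1 * phi p L - - p ^+ 2 * phi 1 L by lra.
apply: H => x _.
have := cvx p x (ltW p0) (ltW p1).
nra.
Qed.


Lemma keyG (p L u : R) : 0 < p -> p < 1 -> 0 < L -> u <= L ->
  phi p L * phi 1 u <= phi 1 L * phi p u.
Proof.
move=> p0 p1 L0 uL.
set D := phi 1 L; set N := phi p L.
have D0 : 0 < D by rewrite /D /phi mul1r; have := expR_gt1Dx (lt0r_neq0 L0); lra.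
have NA : N <= p^+2 * D by apply: stepA => //; exact: ltW.
pose H x := D * (p * expR (p*x) - p) - N * (expR x - 1).
have dG := der_comb D N p.
have dnG : forall x : R, is_derive x (1:R) (fun u => (- D) * phi p u - (- N) * phi 1 u) (- H x).
  move=> x; apply: (is_derive_eq (der_comb (-D) (-N) p x)); rewrite /H; ring.
suff : 0 <= D * phi p u - N * phi 1 u by lra.
have cv := cvx p _ (ltW p0) (ltW p1).
have E1 (x : R) : 0 < x -> 1 < expR x by rewrite expR_gt1.
have E1' (x : R) : 0 <= x -> 1 <= expR x by rewrite -expR0 ler_expR.
case: (lerP u 0) => u0.
  have := mono _ _ u 0 dnG _ u0.
  rewrite !phi0 => M; suff : -D * phi p u - - N * phi 1 u <= -D * 0 - - N * 0 by lra.
  apply: M => x /andP[_ x0].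
  have ex1 : expR x <= 1 by rewrite -expR0 ler_expR ltW.
  have c1 := cv x.
  have Dp : 0 <= D * p by rewrite mulr_ge0 // ltW.
  have m1 := ler_wpM2l Dp c1.
  have m2 : 0 <= (p^+2 * D - N) * (1 - expR x) by rewrite mulr_ge0 // subr_ge0.
  rewrite /H. nra.
have HH : forall s t, 0 <= s -> s <= t -> H s * (expR t - 1) - H t * (expR s - 1) =
   D * p * ((expR (p*s) - 1) * (expR t - 1) - (expR (p*t) - 1) * (expR s - 1)).
  by move=> s t _ _; rewrite /H; ring.
case: (lerP 0 (H u)) => Hu.
  have := mono _ _ 0 u dG _ (ltW u0).
  rewrite !phi0 => M; suff : D * 0 - N * 0 <= D * phi p u - N * phi 1 u by lra.
  apply: M => x /andP[x0 xu].
  have c := chord p x u (ltW p0) (ltW p1) (ltW x0) (ltW xu).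
  have h := HH x u (ltW x0) (ltW xu).
  have e1 := E1 _ u0. have e2 := E1' _ (ltW x0).
  have m1 : 0 <= H u * (expR x - 1) by rewrite mulr_ge0 // subr_ge0.
  have m2 : 0 <= D * p * ((expR (p * x) - 1) * (expR u - 1) - (expR (p * u) - 1) * (expR x - 1)).
    by rewrite mulr_ge0 ?subr_ge0 // mulr_ge0 // ltW.
  have : 0 <= H x * (expR u - 1) by lra.
  rewrite pmulr_lge0 //; lra.
have := mono _ _ u L dnG _ uL.
have -> : -D * phi p L - - N * phi 1 L = 0 by rewrite /D /N; ring.
move=> M; suff : -D * phi p u - - N * phi 1 u <= 0 by lra.
apply: M => x /andP[ux xL].
have c := chord p u x (ltW p0) (ltW p1) (ltW u0) (ltW ux).
have h := HH u x (ltW u0) (ltW ux).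
have e1 := E1 _ u0. have e2 := E1' x (ltW (lt_trans u0 ux)).
have m1 : H u * (expR x - 1) <= 0.
  by rewrite mulr_le0_ge0 ?subr_ge0 // ltW.
have m2 : 0 <= D * p * ((expR (p * u) - 1) * (expR x - 1) - (expR (p * x) - 1) * (expR u - 1)).
  by rewrite mulr_ge0 ?subr_ge0 // mulr_ge0 // ltW.
have : H x * (expR u - 1) <= 0 by lra.
rewrite pmulr_lle0 //; lra.
Qed.

End S.
Arguments phi {R}.

Theorem theorem3p4 (R : realType) (n : nat) (p xi : R) (e : 'I_n -> R) :
  (2 <= n)%N ->
  0 < p -> p < 1 ->
  0 < xi -> @xi_property R n xi ->
  \sum_(i < n) e i = (n * n.-1)%:R ->
  \sum_(i < n) e i ^+ 2 <= (n.-1)%:R ^+ 4 + (n.-1)%:R ->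
  (n.-1)%:R ^+ 2 <= \prod_(i < n) e i ->
  (forall i, e i <= (n.-1)%:R ^+ 2) ->
  (forall i, xi <= e i) ->
  powR ((n.-1)%:R) (2 * p) + (n.-1)%:R <= @fpow R n p e.
Proof.
move=> n2 p0 p1 xi0 _ Hsum Hsq Hprod Hle Hxi.
have epos i : 0 < e i by apply: lt_le_trans (Hxi i).
rewrite /fpow.
have pE i : powR (e i) p = expR (p * ln (e i)).
  by rewrite /powR (negbTE (lt0r_neq0 (epos i))).
set m : R := (n.-1)%:R.
have nE : n%:R = m + 1 :> R by rewrite /m natr1 prednK // (leq_trans _ n2).
have m1 : 1 <= m by rewrite /m ler1n; lia.
have HsumE : \sum_(i < n) e i = (m + 1) * m by rewrite Hsum natrM nE.
have powE : powR m (2 * p) = expR (p * ln (m ^+ 2)).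
  rewrite powRrM powR_mulrn ?(le_trans ler01 m1) //.
  by rewrite /powR (negbTE (lt0r_neq0 _)) ?exprn_gt0 ?(lt_le_trans ltr01 m1).
rewrite powE.
case: (leP m 1) => mle.
  have hm : m = 1 by apply/le_anti; rewrite mle m1.
  have Q : \sum_(i < n) (e i - 1)^+2 = 0.
    apply/le_anti/andP; split; last by apply: sumr_ge0 => i _; exact: sqr_ge0.
    rewrite (eq_bigr (fun i => e i ^+ 2 - 2 * e i + 1)); last by move=> i _; ring.
    rewrite big_split /= sumrB -mulr_sumr sumr_const card_ord HsumE.
    have hm2 : (n.-1)%:R = 1 :> R := hm. rewrite hm2 in Hsq. rewrite hm in nE *. rewrite nE. lra.
  have e1 i : e i = 1.
    have := psumr_eq0P (fun i _ => sqr_ge0 (e i - 1)) Q (i:=i) isT.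
    by move/eqP; rewrite sqrf_eq0 subr_eq0 => /eqP.
  rewrite (eq_bigr (fun=> 1)); last by move=> i _; rewrite e1 powR1.
  by rewrite sumr_const card_ord nE hm expr1n ln1 mulr0 expR0.
have mM : 1 < m ^+ 2 by rewrite exprn_egt1.
set M := m ^+ 2 in mM *.
set L := ln M.
have M0 : 0 < M by apply: lt_trans mM.
have L0 : 0 < L by apply: ln_gt0.
have EL : expR L = M by rewrite /L lnK // posrE.
pose u i := ln (e i).
have ue i : expR (u i) = e i by rewrite /u lnK // posrE.
have uL i : u i <= L.
  by rewrite /u /L ler_ln ?posrE //; exact: Hle i.
have US : L <= \sum_(i < n) u i.
  rewrite -ler_expR EL expR_sum (eq_bigr e); last by move=> i _; rewrite ue.
  exact: Hprod.
have key i := @keyG _ p L (u i) p0 p1 L0 (uL i).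
have Ssum : \sum_(i < n) phi p L * phi 1 (u i) <= \sum_(i < n) phi 1 L * phi p (u i).
  by apply: ler_sum => i _; exact: key i.
rewrite -!mulr_sumr in Ssum.
have S1 : \sum_(i < n) phi 1 (u i) = \sum_(i < n) e i - n%:R - \sum_(i < n) u i.
  rewrite (eq_bigr (fun i => e i - 1 - u i)); last by move=> i _; rewrite /phi !mul1r ue.
  by rewrite !sumrB sumr_const card_ord.
have Sp : \sum_(i < n) phi p (u i) = \sum_(i < n) powR (e i) p - n%:R - p * \sum_(i < n) u i.
  rewrite (eq_bigr (fun i => powR (e i) p - 1 - p * u i)); last by move=> i _; rewrite /phi pE.
  by rewrite !sumrB sumr_const card_ord mulr_sumr.
rewrite S1 Sp HsumE nE in Ssum.
have NA := @stepA _ p L p0 p1 (ltW L0).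
move: Ssum NA; rewrite /phi !mul1r EL.
set P := \sum_(i < n) powR (e i) p.
set U := \sum_(i < n) u i.
set Y := expR (p * L).
set D := M - 1 - L.
have D0 : 0 < D by rewrite /D; have := expR_gt1Dx (lt0r_neq0 L0); rewrite EL; lra.
move=> Ssum NA.
have hint : 0 <= (D * p - (Y - 1 - p * L)) * (U - L).
  apply: mulr_ge0; last by rewrite subr_ge0.
  rewrite subr_ge0; apply: (le_trans NA).
  rewrite [D * p]mulrC; apply: ler_wpM2r; first exact: ltW.
  by rewrite expr2 ger_pMl // ltW.
have : 0 <= D * (P - (Y + m)).
  have eq : D * (P - (Y + m)) = (D * (P - (m + 1) - p * U) - (Y - 1 - p * L) * ((m + 1) * m - (m + 1) - U))
     + (D * p - (Y - 1 - p * L)) * (U - L) by rewrite /D /M; ring.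
  by rewrite eq addr_ge0 // subr_ge0.
by rewrite pmulr_rge0 // subr_ge0.
Qed.
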